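(* Let $S$ be a set of bilabelled graphs, let $\mathscr{C}$ be the skew graph category generated by $S$ (the smallest skew graph category containing $S$), and let $F=\{(K,g_{\mathbf{a}}^{-1}g_{\mathbf{b}})\mid (K,\mathbf{a},\mathbf{b})\in\mathscr{C}\}$ be the corresponding graph fibration. Then every graph in the closure of $\{N_0,N_1\}\cup\{H\mid (H,\mathbf{a},\mathbf{b})\in S\}$ under arbitrary $f$-unions satisfies $F(K)\ne\emptyset$, and for every graph $K$ with $F(K)\neq\emptyset$, $$F(K)=\langle\!\langle \iota(g_{\mathbf{a}^*\mathbf{b}})\mid (H,\mathbf{a},\mathbf{b})\in S,\ \iota\colon H\to K\text{ an injective graph homomorphism}\rangle\!\rangle\trianglelefteq\mathbb{Z}_2^{*V(K)},$$ where $\langle\!\langle\cdot\rangle\!\rangle$ denotes the normal subgroup generated.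
   Context: Graphs are finite, undirected, without multiple edges, loops allowed, considered up to isomorphism; $N_k$ is the edgeless graph on $k$ vertices. For a set $V$, $\mathbb{Z}_2^{*V}$ is the group generated by $V$ subject to $v^2=e$; for a tuple $\mathbf{a}=(a_1,\dots,a_k)$ over $V$, $g_{\mathbf{a}}=a_1\cdots a_k$, and $\mathbf{a}^*$ is the reversed tuple, $\mathbf{a}^*\mathbf{b}$ the concatenation (so $g_{\mathbf{a}^*\mathbf{b}}=g_{\mathbf{a}}^{-1}g_{\mathbf{b}}$). A map $\phi\colon V\to V'$ induces maps on tuples and a homomorphism $\mathbb{Z}_2^{*V}\to\mathbb{Z}_2^{*V'}$, also denoted $\phi$. A vertex overlap of graphs $K,H$ is a subset $f\subset V(K)\times V(H)$ in which each vertex occurs at most once; $K\cup_fH$ is the quotient of $K\sqcup H$ identifying $v$ with $w$ for $(v,w)\in f$ (an edge between two vertices of the quotient iff there is one between some representatives); $f_K,f_H$ are the induced maps. The closure of a set of graphs under $f$-unions is the smallest set containing it and containing $K\cup_fH$ whenever it contains $K,H$. For a set $F$ of pairs $(K,a)$ with $a\in\mathbb{Z}_2^{*V(K)}$ (up to graph isomorphism), $F(K):=\{a\mid (K,a)\in F\}$. Bilabelled graph: $(K,\mathbf{a},\mathbf{b})$ with $K$ a graph, $\mathbf{a}\in V(K)^k$, $\mathbf{b}\in V(K)^l$, up to isomorphism of $K$ preserving the tuples. Operations: $f$-union $(K,\mathbf{a},\mathbf{b})\cup_f(H,\mathbf{c},\mathbf{d})=(K\cup_fH,f_K(\mathbf{a})f_H(\mathbf{c}),f_K(\mathbf{b})f_H(\mathbf{d}))$;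 composition (for $|\mathbf{b}|=|\mathbf{c}|$) $(H,\mathbf{c},\mathbf{d})\cdot(K,\mathbf{a},\mathbf{b})=(H\cdot K,\mathbf{a},\mathbf{d})$ with $H\cdot K$ the quotient of $K\sqcup H$ identifying $b_i$ with $c_i$ for all $i$; involution $(K,\mathbf{a},\mathbf{b})^*=(K,\mathbf{b},\mathbf{a})$. Let $\mathbf{0}=(N_0,\emptyset,\emptyset)$ and $\mathbf{M}^{k,l}=(M,(v,\dots,v),(v,\dots,v))$ for the one-vertex loopless graph $M$ with $k$ inputs, $l$ outputs. $\ker\mathbf{b}$ is the partition of positions of $\mathbf{b}$ by equal entries. A skew graph category is a set of bilabelled graphs containing $\mathbf{0},\mathbf{M}^{1,1},\mathbf{M}^{0,2}$ and closed under all $f$-unions, under compositions $\mathbf{H}\cdot\mathbf{K}$ of $\mathbf{K}=(K,\mathbf{a},\mathbf{b})$, $\mathbf{H}=(H,\mathbf{c},\mathbf{d})$ with $\ker\mathbf{b}=\ker\mathbf{c}$, and involution. (For a skew graph category, $F$ as defined is a graph fibration.) *)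

(* Defs.v *)
From mathcomp Require Import all_boot.
Set Implicit Arguments. Unset Strict Implicit. Unset Printing Implicit Defensive.

(* ---------- Graphs ----------
   A graph has vertex set {0, ..., nv-1}; [adj] is only meaningful on that
   range.  Loops allowed, no multiple edges.  Everything is considered up to
   isomorphism, so all constructions below are specified relationally. *)
Record graph := Graph { nv : nat; adj : nat -> nat -> bool }.

Definition wf_graph (G : graph) : Prop :=
  forall x y, x < nv G -> y < nv G -> adj G x y = adj G y x.

Definition giso (G H : graph) (phi : nat -> nat) : Prop :=
  [/\ nv G = nv H,
      (forall x, x < nv G -> phi x < nv H),
      (forall x y, x < nv G -> y < nv G -> phi x = phi y -> x = y) &
      (forall x y, x < nv G -> y < nv G -> adj G x y = adj H (phi x) (phi y))].

Definition inj_ghom (H K : graph) (iota : nat -> nat) : Prop :=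
  [/\ (forall x, x < nv H -> iota x < nv K),
      (forall x y, x < nv H -> y < nv H -> iota x = iota y -> x = y) &
      (forall x y, x < nv H -> y < nv H -> adj H x y -> adj K (iota x) (iota y))].

Definition dunion (K H : graph) : graph :=
  Graph (nv K + nv H) (fun x y =>
    if x < nv K then (if y < nv K then adj K x y else false)
    else if y < nv K then false else adj H (x - nv K) (y - nv K)).

Definition shift (K : graph) (s : seq nat) : seq nat := [seq nv K + x | x <- s].

(* Q (with quotient map q) is the quotient of G by the equivalence relation
   generated by the pairs E: q is onto, identifies the pairs, its kernel is
   contained in every kernel of a map identifying the pairs (i.e. it is the
   smallest such equivalence), and there is an edge between two quotient
   vertices iff there is one between some representatives. *)
Definition is_quot (G : graph) (E : seq (nat * nat)) (Q : graph) (q : nat -> nat)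
  : Prop :=
  [/\ (forall x, x < nv G -> q x < nv Q),
      (forall y, y < nv Q -> exists2 x, x < nv G & q x = y),
      (forall p, p \in E -> q p.1 = q p.2),
      (forall r : nat -> nat, (forall p, p \in E -> r p.1 = r p.2) ->
         forall x y, x < nv G -> y < nv G -> q x = q y -> r x = r y) &
      (forall x' y', x' < nv Q -> y' < nv Q ->
         (adj Q x' y' <->
          exists x y, [/\ x < nv G, y < nv G, q x = x', q y = y' & adj G x y]))].

Definition vertex_overlap (K H : graph) (f : seq (nat * nat)) : Prop :=
  [/\ uniq (unzip1 f), uniq (unzip2 f) &
      all (fun p => (p.1 < nv K) && (p.2 < nv H)) f].

(* the identifications of K \cup_f H, inside dunion K H *)
Definition overlap_pairs (K : graph) (f : seq (nat * nat)) : seq (nat * nat) :=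
  [seq (p.1, nv K + p.2) | p <- f].

Record bgraph := BG { bgr : graph; bin : seq nat; bout : seq nat }.

Definition wf_bgraph (X : bgraph) : Prop :=
  wf_graph (bgr X) /\ all (fun v => v < nv (bgr X)) (bin X ++ bout X).

Definition bg_iso (X Y : bgraph) : Prop :=
  exists phi, [/\ giso (bgr X) (bgr Y) phi,
                  map phi (bin X) = bin Y & map phi (bout X) = bout Y].

Definition same_ker (b c : seq nat) : Prop :=
  size b = size c /\
  forall i j, i < size b -> j < size b ->
    (nth 0 b i == nth 0 b j) = (nth 0 c i == nth 0 c j).

Definition M_graph : graph := Graph 1 (fun _ _ => false).
Definition bzero : bgraph := BG (Graph 0 (fun _ _ => false)) [::] [::].
Definition bM11 : bgraph := BG M_graph [:: 0] [:: 0].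
Definition bM02 : bgraph := BG M_graph [::] [:: 0; 0].

Inductive skew_gen (S : bgraph -> Prop) : bgraph -> Prop :=
| sg_base X : S X -> skew_gen S X
| sg_iso X Y : skew_gen S X -> bg_iso X Y -> skew_gen S Y
| sg_zero : skew_gen S bzero
| sg_M11 : skew_gen S bM11
| sg_M02 : skew_gen S bM02
| sg_union X Y f Q q :
    skew_gen S X -> skew_gen S Y ->
    vertex_overlap (bgr X) (bgr Y) f ->
    is_quot (dunion (bgr X) (bgr Y)) (overlap_pairs (bgr X) f) Q q ->
    skew_gen S (BG Q (map q (bin X ++ shift (bgr X) (bin Y)))
                     (map q (bout X ++ shift (bgr X) (bout Y))))
(* composition (H,c,d).(K,a,b) = (H.K, a, d), X = (K,a,b), Y = (H,c,d) *)
| sg_comp X Y Q q :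
    skew_gen S X -> skew_gen S Y ->
    same_ker (bout X) (bin Y) ->
    is_quot (dunion (bgr X) (bgr Y)) (zip (bout X) (shift (bgr X) (bin Y))) Q q ->
    skew_gen S (BG Q (map q (bin X)) (map q (shift (bgr X) (bout Y))))
| sg_inv X : skew_gen S X -> skew_gen S (BG (bgr X) (bout X) (bin X)).

Inductive fu_closure (S : bgraph -> Prop) : graph -> Prop :=
| fc_N0 G : nv G = 0 -> fu_closure S G
| fc_N1 G : nv G = 1 -> adj G 0 0 = false -> fu_closure S G
| fc_S X : S X -> fu_closure S (bgr X)
| fc_iso G H phi : fu_closure S G -> giso G H phi -> fu_closure S H
| fc_union K H f Q q :
    fu_closure S K -> fu_closure S H -> vertex_overlap K H f ->
    is_quot (dunion K H) (overlap_pairs K f) Q q -> fu_closure S Q.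

(* ---------- The free product Z_2^{*V}, V = {0,...,n-1} ----------
   Elements are reduced words (no two equal adjacent letters). *)
Definition push (x : nat) (s : seq nat) : seq nat :=
  if s is y :: s' then (if x == y then s' else x :: s) else [:: x].
Definition reduce (w : seq nat) : seq nat := foldr push [::] w.

Inductive nclosure (n : nat) (Gs : seq nat -> Prop) : seq nat -> Prop :=
| nc_gen g : Gs g -> nclosure n Gs (reduce g)
| nc_one : nclosure n Gs [::]
| nc_mul x y : nclosure n Gs x -> nclosure n Gs y -> nclosure n Gs (reduce (x ++ y))
| nc_inv x : nclosure n Gs x -> nclosure n Gs (rev x)
| nc_conj x u : nclosure n Gs x -> all (fun v => v < n) u ->
    nclosure n Gs (reduce (rev u ++ x ++ u)).

(* F(K): the fibration of the category generated by S; g_a^{-1} g_b = g_{a* b}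
   transported along an isomorphism onto K *)
Definition fibration (S : bgraph -> Prop) (K : graph) (w : seq nat) : Prop :=
  exists X phi, [/\ skew_gen S X, giso (bgr X) K phi &
                    w = reduce (map phi (rev (bin X) ++ bout X))].

Definition fib_gens (S : bgraph -> Prop) (K : graph) (w : seq nat) : Prop :=
  exists X iota, [/\ S X, inj_ghom (bgr X) K iota &
                     w = map iota (rev (bin X) ++ bout X)].

(* Main.v *)
Require Import Defs.
From mathcomp Require Import all_boot.
Set Implicit Arguments. Unset Strict Implicit. Unset Printing Implicit Defensive.

Definition red (s : seq nat) := sorted (fun x y : nat => x != y) s.
Definition act (w s : seq nat) := foldr push s w.

Lemma red_push x s : red s -> red (push x s).
Proof.
case: s => [|y s] //= H; case: eqP => [_|/eqP ne]; last by rewrite /red /= ne.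
exact: path_sorted H.
Qed.

Lemma red_act w s : red s -> red (act w s).
Proof. by elim: w => //= c w IH Hs; apply: red_push; apply: IH. Qed.

Lemma red_reduce w : red (reduce w).
Proof. exact: (red_act w (s:=[::])). Qed.

Lemma push_invol x s : red s -> push x (push x s) = s.
Proof.
case: s => [|y s] /=; first by rewrite eqxx.
case: eqP => [->|/eqP ne] H /=; last by rewrite eqxx.
case: s H => [|z s] //= /andP [yz _]; by rewrite (negbTE yz).
Qed.

Lemma reduce_cat x y : reduce (x ++ y) = act x (reduce y).
Proof. by rewrite /reduce /act foldr_cat. Qed.

Lemma act_reduce w s : red s -> act (reduce w) s = act w s.
Proof.
move=> Hs; elim: w => //= c w IH.
have := IH; rewrite /= -/(reduce w).
case E: (reduce w) => [|y r] /=; first by move=> <-.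
case: eqP => [<-|ne] /=.
  by move=> <-; rewrite push_invol // red_act.
by move=> ->.
Qed.

Lemma act_rev w s : red s -> act (rev w) (act w s) = s.
Proof.
elim: w s => //= c w IH s Hs.
rewrite rev_cons -cats1 /act foldr_cat /= -/(act w s) push_invol ?red_act //.
exact: IH.
Qed.

Lemma act_rev' w s : red s -> act w (act (rev w) s) = s.
Proof. by move=> Hs; rewrite -{1}(revK w) act_rev. Qed.

Lemma reduce_red s : red s -> reduce s = s.
Proof.
elim: s => //= x s IH H.
have Hs : red s by apply: path_sorted H.
rewrite -/(reduce s) IH //; case: s H {IH Hs} => //= y s /andP [xy _].
by rewrite (negbTE xy).
Qed.

Lemma L1 x y z : reduce (x ++ reduce y ++ z) = reduce (x ++ y ++ z).
Proof. by rewrite !reduce_cat act_reduce // red_reduce. Qed.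

Lemma L2a x y z : reduce (x ++ rev y ++ y ++ z) = reduce (x ++ z).
Proof. by rewrite !reduce_cat act_rev // red_reduce. Qed.

Lemma L2b x y z : reduce (x ++ y ++ rev y ++ z) = reduce (x ++ z).
Proof. by rewrite !reduce_cat act_rev' // red_reduce. Qed.

Lemma red_rev s : red s -> red (rev s).
Proof.
rewrite /red rev_sorted; apply: sub_sorted => a b; by rewrite eq_sym.
Qed.

Lemma act_rev_reduce w s : red s -> act (rev w) s = act (rev (reduce w)) s.
Proof.
move=> Hs.
have H1 : red (act (rev (reduce w)) s) by apply: red_act.
by rewrite -{1}(act_rev' (reduce w) Hs) act_reduce // act_rev.
Qed.

Lemma L3 w : reduce (rev w) = rev (reduce w).
Proof.
have := act_rev_reduce w (s:=[::]) erefl; rewrite /act -/(reduce _) => ->.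
rewrite -/(reduce _) reduce_red //; apply: red_rev; exact: red_reduce.
Qed.

Lemma act_map h w s : red s -> act (map h (reduce w)) s = act (map h w) s.
Proof.
move=> Hs; elim: w => //= c w IH.
have := IH; rewrite /= -/(reduce w).
case E: (reduce w) => [|y r] /=; first by move=> <-.
case: eqP => [<-|ne] /=.
  by move=> <-; rewrite push_invol // red_act.
by move=> ->.
Qed.

Lemma L5 h w : reduce (map h (reduce w)) = reduce (map h w).
Proof. exact: act_map. Qed.

Lemma L4 w : reduce (reduce w) = reduce w.
Proof. by rewrite reduce_red // red_reduce. Qed.

Lemma L6 x y : reduce (reduce x ++ reduce y) = reduce (x ++ y).
Proof. by rewrite !reduce_cat L4 act_reduce // red_reduce. Qed.

Lemma giso_inj G H phi : giso G H phi -> inj_ghom G H phi.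
Proof. by case=> _ h1 h2 h3; split=> // x y hx hy; rewrite -h3. Qed.

Lemma inj_comp A B C f g : inj_ghom A B f -> inj_ghom B C g -> inj_ghom A C (g \o f).
Proof.
case=> f1 f2 f3 [g1 g2 g3]; split=> [x hx|x y hx hy /= e|x y hx hy e] /=.
- by apply: g1; apply: f1.
- by apply: f2 => //; apply: g2 => //; apply: f1.
- by apply: g3; try apply: f1; try apply: f3.
Qed.

Lemma giso_id G : giso G G id.
Proof. by split. Qed.

Lemma nc_map S G Q h w : inj_ghom G Q h ->
  nclosure (nv G) (fib_gens S G) w -> nclosure (nv Q) (fib_gens S Q) (reduce (map h w)).
Proof.
move=> hh; elim=> {w} [g [X [iota [HX Hi ->]]]| |x y _ IHx _ IHy|x _ IH|x u _ IH Hu].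
- rewrite L5 -map_comp; apply: nc_gen; exists X, (h \o iota); split=> //.
  exact: inj_comp Hi hh.
- exact: nc_one.
- rewrite L5 map_cat -L6; exact: nc_mul.
- by rewrite map_rev L3; apply: nc_inv.
- rewrite L5 !map_cat map_rev -L1; apply: nc_conj => //.
  case: hh => h1 _ _; apply/allP => z /mapP [v hv ->]; apply: h1.
  exact: (allP Hu).
Qed.

Lemma quot_range G E Q q x : is_quot G E Q q -> x < nv G -> q x < nv Q.
Proof. by case=> h1 *; apply: h1. Qed.

Lemma quot_homL A B E Q q x y : is_quot (dunion A B) E Q q ->
  x < nv A -> y < nv A -> adj A x y -> adj Q (q x) (q y).
Proof.
move=> hq hx hy hxy; have := hq; case=> _ _ _ _ h5.
have hx' : x < nv (dunion A B) by rewrite /= ltn_addr.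
have hy' : y < nv (dunion A B) by rewrite /= ltn_addr.
apply/h5; try exact: (quot_range hq).
by exists x, y; split=> //=; rewrite hx hy.
Qed.

Lemma quot_homR A B E Q q x y : is_quot (dunion A B) E Q q ->
  x < nv B -> y < nv B -> adj B x y -> adj Q (q (nv A + x)) (q (nv A + y)).
Proof.
move=> hq hx hy hxy; have := hq; case=> _ _ _ _ h5.
have hx' : nv A + x < nv (dunion A B) by rewrite /= ltn_add2l.
have hy' : nv A + y < nv (dunion A B) by rewrite /= ltn_add2l.
apply/h5; try exact: (quot_range hq).
exists (nv A + x), (nv A + y); split=> //=.
by rewrite !ltnNge !leq_addr /= !addKn.
Qed.

Lemma quot_sep G E Q q (r : nat -> nat) x y : is_quot G E Q q ->
  (forall p, p \in E -> r p.1 = r p.2) -> x < nv G -> y < nv G -> q x = q y -> r x = r y.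
Proof. by case=> _ _ _ h4 _ hr; apply: h4. Qed.

Lemma quot_injL A B E Q q (r : nat -> nat) : is_quot (dunion A B) E Q q ->
  (forall p, p \in E -> r p.1 = r p.2) -> (forall x, x < nv A -> r x = x) ->
  inj_ghom A Q q.
Proof.
move=> hq hr hrx; split=> [x hx|x y hx hy e|x y hx hy]; last exact: quot_homL hq hx hy.
  by apply: (quot_range hq); rewrite /= ltn_addr.
by rewrite -(hrx x hx) -(hrx y hy); apply: (quot_sep hq hr) => //=; rewrite ltn_addr.
Qed.

Lemma quot_injR A B E Q q (r : nat -> nat) : is_quot (dunion A B) E Q q ->
  (forall p, p \in E -> r p.1 = r p.2) -> (forall x, x < nv B -> r (nv A + x) = nv A + x) ->
  inj_ghom B Q (fun x => q (nv A + x)).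
Proof.
move=> hq hr hrx; split=> [x hx|x y hx hy e|x y hx hy]; last exact: quot_homR hq hx hy.
  by apply: (quot_range hq); rewrite /= ltn_add2l.
apply/eqP; rewrite -(eqn_add2l (nv A)) -(hrx x hx) -(hrx y hy); apply/eqP.
by apply: (quot_sep hq hr) => //=; rewrite ltn_add2l.
Qed.

Lemma nth_unzip (f : seq (nat * nat)) p : uniq (unzip2 f) -> p \in f ->
  nth 0 (unzip1 f) (index p.2 (unzip2 f)) = p.1.
Proof.
move=> hu hp; set i := index p f.
have hi : i < size f by rewrite index_mem.
have e2 : nth 0 (unzip2 f) i = p.2 by rewrite (nth_map (0,0)) // nth_index.
by rewrite -e2 index_uniq ?size_map // (nth_map (0,0)) // nth_index.
Qed.

Lemma nth_unzip' (f : seq (nat * nat)) p : uniq (unzip1 f) -> p \in f ->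
  nth 0 (unzip2 f) (index p.1 (unzip1 f)) = p.2.
Proof.
move=> hu hp; set i := index p f.
have hi : i < size f by rewrite index_mem.
have e2 : nth 0 (unzip1 f) i = p.1 by rewrite (nth_map (0,0)) // nth_index.
by rewrite -e2 index_uniq ?size_map // (nth_map (0,0)) // nth_index.
Qed.

Lemma union_inj A B f Q q : vertex_overlap A B f ->
  is_quot (dunion A B) (overlap_pairs A f) Q q ->
  inj_ghom A Q q /\ inj_ghom B Q (fun x => q (nv A + x)).
Proof.
case=> u1 u2 /allP ha hq; split.
- apply: (@quot_injL A B _ Q q (fun z => if z < nv A then z else
     if z - nv A \in unzip2 f then nth 0 (unzip1 f) (index (z - nv A) (unzip2 f)) else z) hq) => //.
    move=> p /mapP [[a b] hab ->] /=; have /andP [h1 h2] := ha _ hab.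
    rewrite h1 ltnNge leq_addr /= addKn.
    have -> : b \in unzip2 f by apply/mapP; exists (a, b).
    by rewrite (nth_unzip u2 hab).
  by move=> x ->.
- apply: (@quot_injR A B _ Q q (fun z => if z < nv A then
     (if z \in unzip1 f then nv A + nth 0 (unzip2 f) (index z (unzip1 f)) else z) else z) hq) => //.
    move=> p /mapP [[a b] hab ->] /=; have /andP [h1 h2] := ha _ hab.
    rewrite h1 ltnNge leq_addr /=.
    have -> : a \in unzip1 f by apply/mapP; exists (a, b).
    by rewrite (nth_unzip' u1 hab).
  by move=> x _; rewrite ltnNge leq_addr.
Qed.

Lemma comp_inj A B b c Q q : same_ker b c -> all (fun v => v < nv A) b ->
  all (fun v => v < nv B) c ->
  is_quot (dunion A B) (zip b (shift A c)) Q q ->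
  [/\ inj_ghom A Q q, inj_ghom B Q (fun x => q (nv A + x)) & map q b = map q (shift A c)].
Proof.
case=> hs hk /allP hb /allP hc hq.
have szs : size (shift A c) = size b by rewrite size_map.
have mz : forall p, p \in zip b (shift A c) ->
    exists2 i, i < size b & p = (nth 0 b i, nv A + nth 0 c i).
  move=> p hp; exists (index p (zip b (shift A c))).
    by rewrite -index_mem size_zip szs minnn in hp.
  have hi : index p (zip b (shift A c)) < size b.
    by rewrite -index_mem size_zip szs minnn in hp.
  by rewrite -{1}(nth_index (0,0) hp) nth_zip // (nth_map 0) // -hs.
have inz : forall i, i < size b -> (nth 0 b i, nv A + nth 0 c i) \in zip b (shift A c).
  move=> i hi; rewrite -(nth_map 0 0 (fun x => nv A + x)) -?hs //.
  rewrite -nth_zip //; apply: mem_nth; by rewrite size_zip szs minnn.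
have kb : forall i j, i < size b -> j < size b -> nth 0 c i = nth 0 c j -> nth 0 b i = nth 0 b j.
  by move=> i j hi hj e; apply/eqP; rewrite hk // e.
have kc : forall i j, i < size b -> j < size b -> nth 0 b i = nth 0 b j -> nth 0 c i = nth 0 c j.
  by move=> i j hi hj e; apply/eqP; rewrite -hk // e.
split.
- apply: (@quot_injL A B _ Q q (fun z => if z < nv A then z else
     if z - nv A \in c then nth 0 b (index (z - nv A) c) else z) hq); last by move=> x ->.
  move=> p /mz [i hi ->] /=.
  rewrite hb ?mem_nth // ltnNge leq_addr /= addKn mem_nth -?hs //.
  have hci : nth 0 c i \in c by rewrite mem_nth // -hs.
  apply: kb => //; first by rewrite hs index_mem.
  by rewrite nth_index.
- apply: (@quot_injR A B _ Q q (fun z => if z < nv A then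
     (if z \in b then nv A + nth 0 c (index z b) else z) else z) hq); last first.
    by move=> x _; rewrite ltnNge leq_addr.
  move=> p /mz [i hi ->] /=.
  have hbi : nth 0 b i \in b by rewrite mem_nth.
  rewrite hb // hbi ltnNge leq_addr /=; congr (_ + _).
  apply: kc => //; first by rewrite index_mem.
  by rewrite nth_index.
- apply: (eq_from_nth (x0 := 0)); first by rewrite !size_map.
  move=> i; rewrite size_map => hi.
  rewrite (nth_map 0) // (nth_map 0) ?szs // (nth_map 0) -?hs //.
  by case: hq => _ _ h3 _ _; apply: (h3 _ (inz i hi)).
Qed.

Lemma all_map_lt n m f s : (forall x, x < n -> f x < m) ->
  all (fun v => v < n) s -> all (fun v => v < m) (map f s).
Proof. move=> hf /allP hs; apply/allP => z /mapP [v hv ->]; exact/hf/hs. Qed.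

Lemma shift_lt A B s : all (fun v => v < nv B) s ->
  all (fun v => v < nv (dunion A B)) (shift A s).
Proof. by apply: all_map_lt => x hx /=; rewrite ltn_add2l. Qed.

Lemma lift_lt A B s : all (fun v => v < nv A) s ->
  all (fun v => v < nv (dunion A B)) s.
Proof. by move/allP=> h; apply/allP => x /h /= hx; rewrite ltn_addr. Qed.

Lemma W S X : (forall X, S X -> wf_bgraph X) -> skew_gen S X ->
  all (fun v => v < nv (bgr X)) (bin X ++ bout X).
Proof.
move=> HS; elim=> {X}.
- by move=> X /HS [].
- move=> X Y _ IH [phi [hp e1 e2]]; rewrite -e1 -e2 -map_cat.
  by case: hp => _ h1 _ _; apply: all_map_lt IH.
- by [].
- by [].
- by [].
- move=> X Y f Q q _ IHX _ IHY _ hq /=; rewrite -map_cat.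
  apply: (all_map_lt (n := nv (dunion (bgr X) (bgr Y)))) => [x hx|]; first exact: quot_range hq hx.
  move: IHX IHY; rewrite !all_cat => /andP [h1 h2] /andP [h3 h4].
  by rewrite (lift_lt (bgr Y) h1) (lift_lt (bgr Y) h2) (shift_lt (bgr X) h3) (shift_lt (bgr X) h4).
- move=> X Y Q q _ IHX _ IHY _ hq /=; rewrite -map_cat.
  apply: (all_map_lt (n := nv (dunion (bgr X) (bgr Y)))) => [x hx|]; first exact: quot_range hq hx.
  move: IHX IHY; rewrite !all_cat => /andP [h1 h2] /andP [h3 h4].
  by rewrite (lift_lt (bgr Y) h1) (shift_lt (bgr X) h4).
- by move=> X _; rewrite /= !all_cat andbC.
Qed.

Lemma map_shift (f : nat -> nat) A s : map f (shift A s) = map (fun x => f (nv A + x)) s.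
Proof. by rewrite /shift -map_comp. Qed.

Lemma Fwd S X : (forall X, S X -> wf_bgraph X) -> skew_gen S X ->
  nclosure (nv (bgr X)) (fib_gens S (bgr X)) (reduce (rev (bin X) ++ bout X)).
Proof.
move=> HS hX; elim: hX => {X}.
- move=> X HX; apply: nc_gen; exists X, id; split=> //; last by rewrite map_id.
- move=> X Y _ IH [phi [hp e1 e2]].
  have := nc_map (giso_inj hp) IH; by rewrite L5 map_cat map_rev e1 e2.
- exact: nc_one.
- exact: nc_one.
- exact: nc_one.
- move=> X Y f Q q _ IHX hY IHY hf hq /=.
  have [iX iY] := union_inj hf hq.
  have A1 := nc_map iX IHX; have A2 := nc_map iY IHY; rewrite L5 in A1; rewrite L5 in A2.
  have hu : all (fun v => v < nv Q) (map q (shift (bgr X) (bin Y))).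
    apply: (all_map_lt (n := nv (dunion (bgr X) (bgr Y)))) => [x hx|]; first exact: quot_range hq hx.
    apply: shift_lt.
    by move: (W HS hY); rewrite all_cat => /andP [].
  have := nc_mul (nc_conj A1 hu) A2.
  rewrite L6 -!catA L1 !map_cat !map_rev !map_shift !rev_cat -!catA.
  set U := map _ (bin Y).
  rewrite [X in reduce X](_ : _ = (rev U ++ rev (map q (bin X)) ++ map q (bout X)) ++ U ++ rev U ++
     map (fun x => q (nv (bgr X) + x)) (bout Y)); last by rewrite -!catA.
  by rewrite L2b -!catA.
- move=> X Y Q q hX IHX hY IHY hk hq /=.
  have hb : all (fun v => v < nv (bgr X)) (bout X).
    by move: (W HS hX); rewrite all_cat => /andP [].
  have hc : all (fun v => v < nv (bgr Y)) (bin Y).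
    by move: (W HS hY); rewrite all_cat => /andP [].
  have [iX iY e] := comp_inj hk hb hc hq.
  have A1 := nc_map iX IHX; have A2 := nc_map iY IHY.
  rewrite L5 in A1; rewrite L5 in A2.
  have := nc_mul A1 A2.
  rewrite L6 !map_cat !map_rev -!catA -map_shift -e.
  by rewrite L2b map_shift.
- move=> X _ IH /=; have := nc_inv IH; by rewrite -L3 rev_cat revK.
Qed.

From mathcomp Require Import zify.

Definition fi (H : graph) (io : nat -> nat) := [seq (io h, h) | h <- iota 0 (nv H)].
Definition qi (K : graph) (io : nat -> nat) :=
  fun x => if x < nv K then x else io (x - nv K).

Lemma IQ H K io : inj_ghom H K io ->
  vertex_overlap K H (fi H io) /\
  is_quot (dunion K H) (overlap_pairs K (fi H io)) K (qi K io).
Proof.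
case=> h1 h2 h3; split.
  split.
  - rewrite /fi /unzip1 -map_comp map_inj_in_uniq ?iota_uniq //.
    by move=> x y; rewrite !mem_iota /= => hx hy; apply: h2; lia.
  - by rewrite /fi /unzip2 -map_comp map_id iota_uniq.
  - apply/allP => p /mapP [h]; rewrite mem_iota => hh -> /=.
    by rewrite h1 //=; lia.
split.
- move=> x /= hx; rewrite /qi; case: ifP => // hk; apply: h1; lia.
- by move=> y hy; exists y; rewrite /qi ?hy //= ltn_addr.
- move=> p /mapP [p' /mapP [h]]; rewrite mem_iota => hh -> -> /=.
  rewrite /qi h1; last by lia.
  by rewrite ltnNge leq_addr /= addKn.
- move=> r hr x y /= hx hy; rewrite /qi.
  have key : forall z, nv K <= z -> z < nv K + nv H -> r (io (z - nv K)) = r z.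
    move=> z hz1 hz2.
    have := hr (io (z - nv K), nv K + (z - nv K)); rewrite /= subnKC //; apply.
    apply/mapP; exists (io (z - nv K), z - nv K); last by rewrite /= subnKC.
    by apply/mapP; exists (z - nv K) => //; rewrite mem_iota; lia.
  case: ifP => hxk; case: ifP => hyk.
  + by move=> ->.
  + move=> e; rewrite e key //; lia.
  + move=> e; rewrite -e key //; lia.
  + move=> /h2 e; have : x - nv K = y - nv K by apply: e; lia.
    by move=> e2; congr r; lia.
- move=> x' y' hx hy; split.
    move=> hxy; exists x', y'; split=> //=; rewrite /qi ?hx ?hy ?ltn_addr //.
  move=> [x [y [hx' hy' <- <- /=]]]; rewrite /qi.
  case: ifP => hxk; case: ifP => hyk //.
  move=> hxy; move: hx' hy'; rewrite /= => hx' hy'; apply: h3 => //; lia.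
Qed.

Lemma qi_map K io a c : all (fun v => v < nv K) a ->
  map (qi K io) (a ++ shift K c) = a ++ map io c.
Proof.
move/allP=> ha; rewrite map_cat map_shift; congr (_ ++ _).
  by rewrite -[RHS]map_id; apply/eq_in_map => x /ha hx; rewrite /qi hx.
by apply: eq_map => x; rewrite /qi ltnNge leq_addr /= addKn.
Qed.

Lemma Cons S K H io a b c d : inj_ghom H K io -> all (fun v => v < nv K) (a ++ b) ->
  skew_gen S (BG K a b) -> skew_gen S (BG H c d) ->
  skew_gen S (BG K (a ++ map io c) (b ++ map io d)).
Proof.
move=> hi hab hX hY; have [hv hq] := IQ hi.
have := sg_union hX hY hv hq; rewrite /= !qi_map //.
- by move: hab; rewrite all_cat => /andP [].
- by move: hab; rewrite all_cat => /andP [].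
Qed.

Definition PP S K w := exists a b, skew_gen S (BG K a b) /\ w = reduce (rev a ++ b).

Section PPsec.
Variable S : bgraph -> Prop.
Hypothesis HS : forall X, S X -> wf_bgraph X.
Variable K : graph.

Lemma PP_range a b : skew_gen S (BG K a b) -> all (fun v => v < nv K) (a ++ b).
Proof. exact: W HS. Qed.

Lemma PP_letter v w : v < nv K -> PP S K w -> PP S K (reduce ([:: v] ++ w ++ [:: v])).
Proof.
move=> hv [a [b [hX ->]]]; exists (a ++ [:: v]), (b ++ [:: v]); split.
  apply: (Cons (H := M_graph) (io := fun _ => v) (c := [:: 0]) (d := [:: 0])) => //.
  - by split=> //= x y; case: x; case: y.
  - exact: PP_range.
  - exact: sg_M11.
by rewrite L1 rev_cat /= -!catA.
Qed.

Lemma PP_conj u w : all (fun v => v < nv K) u -> PP S K w -> PP S K (reduce (rev u ++ w ++ u)).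
Proof.
elim: u w => [|v u IH] w /=.
  by move=> _ [a [b [hX ->]]]; rewrite cats0 L4; exists a, b.
move=> /andP [hv hu] hw; have := IH _ hu (PP_letter hv hw).
by rewrite L1 rev_cons -cats1 -!catA.
Qed.

Lemma PP_inv w : PP S K w -> PP S K (rev w).
Proof.
move=> [a [b [hX ->]]]; exists b, a; split; first exact: (sg_inv hX).
by rewrite -L3 rev_cat revK.
Qed.

Lemma PP_union a b c d : skew_gen S (BG K a b) -> skew_gen S (BG K c d) ->
  skew_gen S (BG K (a ++ c) (b ++ d)).
Proof.
move=> hX hY; have := Cons (io := id) _ (PP_range hX) hX hY; rewrite !map_id; apply.
by split.
Qed.

Lemma PP_mul x y : PP S K x -> PP S K y -> PP S K (reduce (x ++ y)).
Proof.
move=> hx [c [d [hY ->]]].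
have hc : all (fun v => v < nv K) (rev c).
  by move: (PP_range hY); rewrite all_cat all_rev => /andP [].
have [a' [b' [hX' e']]] := PP_conj hc hx; rewrite revK in e'.
exists (a' ++ c), (b' ++ d); split; first exact: PP_union.
case: hx e' => a [b [_ ->]] e'.
have L2a0 : forall y z, reduce (rev y ++ y ++ z) = reduce z := fun y z => L2a [::] y z.
rewrite L6 rev_cat.
have -> : reduce ((rev c ++ rev a') ++ b' ++ d) = reduce (rev c ++ reduce (rev a' ++ b') ++ d).
  by rewrite L1 -!catA.
rewrite -e' L1 -!catA L2a0.
have := L1 [::] (rev a ++ b) (rev c ++ d); rewrite /= => ->.
by rewrite -!catA.
Qed.

Lemma PP_gen x0 g : PP S K x0 -> fib_gens S K g -> PP S K (reduce g).
Proof.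
move=> hx0 [[H c d] [io [HX hi ->]]] /=.
have hx0' := hx0; case: hx0' => a0 [b0 [hX0 e0]].
have hz : PP S K (reduce (rev (a0 ++ map io c) ++ b0 ++ map io d)).
  exists (a0 ++ map io c), (b0 ++ map io d); split=> //.
  exact: Cons hi (PP_range hX0) hX0 (sg_base HX).
have hC : all (fun v => v < nv K) (map io c).
  case: (HS HX) => _; rewrite /= all_cat => /andP [hc _].
  by case: hi => h1 _ _; apply: all_map_lt hc.
have := PP_mul (PP_inv (PP_conj hC hx0)) hz.
set C := map io c.
rewrite -L3 !rev_cat revK L6 e0 -!catA.
have L2a0 : forall y z, reduce (rev y ++ y ++ z) = reduce z := fun y z => L2a [::] y z.
have L2b' : forall x1 x2 y z, reduce (x1 ++ x2 ++ y ++ rev y ++ z) = reduce (x1 ++ x2 ++ z).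
  by move=> x1 x2 y z; rewrite (catA x1) L2b -catA.
rewrite L2b' -L3 L1 rev_cat revK -!catA L2b' L2a.
by rewrite map_cat map_rev.
Qed.

End PPsec.

Lemma part1 S K : fu_closure S K -> exists a b, skew_gen S (BG K a b).
Proof.
elim=> {K}.
- move=> G hG; exists [::], [::].
  apply: (sg_iso (X := bzero)); first exact: sg_zero.
  by exists id; split=> //; split=> //= x; rewrite ltn0.
- move=> G h1 h2; exists [:: 0], [:: 0].
  apply: (sg_iso (X := bM11)); first exact: sg_M11.
  exists id; split=> //; split=> //=; rewrite ?h1 //.
  by move=> [|x] [|y] //= _ _; rewrite h2.
- by move=> [G a b] hX; exists a, b; apply: sg_base.
- move=> G H phi _ [a [b hX]] hp; exists (map phi a), (map phi b).
  by apply: (sg_iso hX); exists phi; split.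
- move=> K H f Q q _ [a [b hX]] _ [c [d hY]] hv hq.
  by eexists; eexists; apply: (sg_union hX hY hv hq).
Qed.

Lemma fib_PP S K w : fibration S K w -> PP S K w.
Proof.
move=> [X [phi [hX hp ->]]]; exists (map phi (bin X)), (map phi (bout X)); split.
  by apply: (sg_iso hX); exists phi; split.
by rewrite map_cat map_rev.
Qed.

Lemma PP_fib S K w : PP S K w -> fibration S K w.
Proof.
move=> [a [b [hX ->]]]; exists (BG K a b), id; split=> //; try exact: giso_id.
by rewrite map_id.
Qed.

Theorem proposition2p29 (S : bgraph -> Prop)
  (HS : forall X, S X -> wf_bgraph X) :
  (forall K, fu_closure S K -> exists w, fibration S K w) /\
  (forall K, wf_graph K -> (exists w, fibration S K w) ->
     forall w, fibration S K w <-> nclosure (nv K) (fib_gens S K) w).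
Proof.
split.
  move=> K /part1 [a [b hX]]; exists (reduce (rev a ++ b)); apply: PP_fib.
  by exists a, b.
move=> K _ [w0 /fib_PP hw0] w; split.
  move=> [X [phi [hX hp ->]]].
  by have := nc_map (giso_inj hp) (Fwd HS hX); rewrite L5.
move=> hw; apply: PP_fib; elim: hw.
- by move=> g hg; apply: (PP_gen HS hw0).
- have := PP_mul HS (PP_inv hw0) hw0.
  case: hw0 => a [b [_ ->]]; rewrite -L3 L6.
  by have := L2a [::] (rev a ++ b) [::]; rewrite /= cats0 => ->.
- by move=> x y _ hx _ hy; apply: (PP_mul HS).
- by move=> x _ hx; apply: PP_inv.
- by move=> x u _ hx hu; apply: (PP_conj HS).
Qed.
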